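(* There exist two populations $P$ and $P'$ with the same users, intervals, speech points, disutilities $b_i$ and initial adopters $\mathcal S_0$, differing only in personalization parameters with $\lambda_i>\lambda_i'$ for all $i\in[n]$ (where $\lambda_i$ belongs to $P$ and $\lambda_i'$ to $P'$), such that $$s(P,I^* )>s(P',I^{*\prime}),$$ where $I^*$ and $I^{*\prime}$ are moderation windows maximizing $s(P,\cdot)$ and $s(P',\cdot)$ respectively. Moreover, for every $b>0$ and $\lambda\in(0,1]$ such a pair can be constructed with $b_1=\dots=b_n=b$, $\lambda_1=\dots=\lambda_n=\lambda$, and $\lambda_1'=\dots=\lambda_n'=\lambda'$ for some appropriately chosen $\lambda'$.
   Context: A population consists of users $1,\dots,n$ and a set $\mathcal S_0$ of initial adopters; user $i$ has a closed interval $[l_i,r_i]$, speech point $p_i\in[l_i,r_i]$, disutility $b_i\ge0$ and personalization parameter $\lambda_i\in[0,1]$. For $\mathcal S\subseteq[n]$, user $i$'s utility is $u_i(\mathcal S)=\sum_{j\in\mathcal S\setminus\{i\}}\big(\mathbf 1[p_j\in[l_i,r_i]]-\lambda_ib_i\mathbf 1[p_j\notin[l_i,r_i]]\big)$. A moderation window is a closed interval $I$; users with $p_i\notin I$ are banned and never on the platform. The platform starts with the non-banned initial adopters; a starvation-free switching order $\sigma:\mathbb Z_{>0}\to[n]$ lists each user infinitely often, and at time $t$ the non-banned user $\sigma(t)$ is on the platform after step $t$ iff $u_{\sigma(t)}(\mathcal W)\ge0$ where $\mathcal W$ is the current set of users on the platform; others are unchanged. With $\mathcal W(P,I,\sigma,t)$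 the set after step $t$, $s(P,I)=\min_\sigma\liminf_{t\to\infty}|\mathcal W(P,I,\sigma,t)|$ over starvation-free $\sigma$. *)

(* Defs.v *)
From mathcomp Require Import all_boot all_order all_algebra.
From mathcomp Require Import reals.
Set Implicit Arguments. Unset Strict Implicit. Unset Printing Implicit Defensive.
Import Order.TTheory GRing.Theory Num.Theory.
Local Open Scope ring_scope.

Record population (R : realType) (n : nat) := Population {
  pl : 'I_n -> R;          (* left endpoint l_i of the interval *)
  pr : 'I_n -> R;          (* right endpoint r_i *)
  pp : 'I_n -> R;          (* speech point p_i *)
  pb : 'I_n -> R;          (* disutility b_i *)
  plam : 'I_n -> R;        (* personalization parameter lambda_i *)
  pS0 : {set 'I_n}         (* initial adopters *)
}.

Definition in_cl (R : realType) (x a c : R) : bool := (a <= x) && (x <= c).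

Definition valid_pop (R : realType) n (P : population R n) : Prop :=
  forall i, [/\ in_cl (pp P i) (pl P i) (pr P i), 0 <= pb P i &
               in_cl (plam P i) 0 1].

Definition utility (R : realType) n (P : population R n) (i : 'I_n)
  (S : {set 'I_n}) : R :=
  \sum_(j in S | j != i)
     (if in_cl (pp P j) (pl P i) (pr P i) then 1 else - (plam P i * pb P i)).

(* A moderation window is a closed interval [I.1, I.2]. *)
Definition window (R : realType) := (R * R)%type.

Definition banned (R : realType) n (P : population R n) (I : window R)
  (i : 'I_n) : bool := ~~ in_cl (pp P i) I.1 I.2.

Definition step (R : realType) n (P : population R n) (I : window R)
  (W : {set 'I_n}) (k : 'I_n) : {set 'I_n} :=
  if banned P I k then W
  else if 0 <= utility P k W then k |: W else W :\ k.

(* W(P, I, sigma, t): the set after step t; W 0 is the initial platform.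
   Step t (t >= 1) is performed by user sigma t (sigma 0 is unused). *)
Fixpoint traj (R : realType) n (P : population R n) (I : window R)
  (sigma : nat -> 'I_n) (t : nat) : {set 'I_n} :=
  match t with
  | 0 => [set i in pS0 P | ~~ banned P I i]
  | t'.+1 => step P I (traj P I sigma t') (sigma t)
  end.

Definition starvation_free n (sigma : nat -> 'I_n) : Prop :=
  forall i : 'I_n, forall N : nat, exists t, (N < t)%N /\ sigma t = i.

Definition is_liminf (u : nat -> nat) (k : nat) : Prop :=
  (exists N, forall t, (N <= t)%N -> (k <= u t)%N) /\
  (forall N, exists t, (N <= t)%N /\ (u t <= k)%N).

(* k = s(P, I) = min over starvation-free sigma of liminf |W(P,I,sigma,t)| *)
Definition is_s (R : realType) n (P : population R n) (I : window R)
  (k : nat) : Prop :=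
  (exists sigma, starvation_free sigma /\
                 is_liminf (fun t => #|traj P I sigma t|) k) /\
  (forall sigma k', starvation_free sigma ->
     is_liminf (fun t => #|traj P I sigma t|) k' -> (k <= k')%N).

(* k = s(P, I* ) for a moderation window I* maximizing s(P, .) *)
Definition is_opt_s (R : realType) n (P : population R n) (k : nat) : Prop :=
  exists Istar : window R, is_s P Istar k /\
    forall (J : window R) (j : nat), is_s P J j -> (j <= k)%N.

(* Main.v *)
Require Import Defs.
From mathcomp Require Import all_boot all_order all_algebra.
From mathcomp Require Import reals.
From mathcomp Require Import lra zify ring.
From Stdlib Require Import Classical.
Import Order.TTheory GRing.Theory Num.Theory.
Lemma card_range n lo hi :
  #|[set i : 'I_n | (lo <= i) && (i < hi)]| = minn n hi - minn n lo.
Proof.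
rewrite -sum1_card big_mkcond /=.
elim: n => [|n IH]; first by rewrite big_ord0 !min0n.
rewrite big_ord_recr /= inE.
rewrite (eq_bigr (fun i : 'I_n => if (lo <= i) && (i < hi) then 1 else 0)); last first.
  by move=> i _; rewrite inE.
rewrite (_ : \sum_(i < n) _ = minn n hi - minn n lo); last first.
  rewrite -IH; apply: eq_bigr => i _; by rewrite inE.
rewrite (_ : nat_of_ord (@ord_max n) = n) //.
by case: (leqP lo n) => h1; case: (ltnP n hi) => h2 /=; lia.
Qed.

Local Open Scope ring_scope.

Lemma min_witness (Q : nat -> Prop) k : Q k -> exists k0, Q k0 /\ forall j, (j < k0)%N -> ~ Q j.
Proof.
elim/ltn_ind: k => k IH Qk.
case: (classic (exists j, (j < k)%N /\ Q j)) => [[j [jk Qj]]|H].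
  exact: IH jk Qj.
exists k; split => // j jk Qj; apply: H; by exists j.
Qed.

Lemma liminf_exists (u : nat -> nat) B : (forall t, (u t <= B)%N) -> exists k, is_liminf u k.
Proof.
move=> uB.
have QB : forall N, exists t, (N <= t)%N /\ (u t <= B)%N by move=> N; exists N.
have [k0 [Qk0 Hmin]] := @min_witness (fun k => forall N, exists t, (N <= t)%N /\ (u t <= k)%N) B QB.
exists k0; split => //.
case: k0 Qk0 Hmin => [|k] Qk Hmin; first by exists 0%N.
have := Hmin k (ltnSn k).
move/not_all_ex_not => [N HN]; exists N => t Nt.
case: (leqP k.+1 (u t)) => // ut; exfalso; apply: HN; exists t; split => //.
Qed.

Section Gen.
Variables (R : realType) (n : nat) (P : population R n) (I : window R).

Lemma traj_card_le sigma t : (#|traj P I sigma t| <= n)%N.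
Proof. by apply: leq_trans (max_card _) _; rewrite card_ord. Qed.

Lemma traj_sub sigma t : traj P I sigma t \subset [set i | ~~ banned P I i].
Proof.
elim: t => [|t IH] /=.
  by apply/subsetP => i; rewrite !inE => /andP[].
rewrite /step; case: ifP => // hb; case: ifP => _.
  by rewrite subUset sub1set inE hb IH.
by apply: subset_trans IH; apply: subsetDl.
Qed.

Lemma is_s_upper sigma B j : starvation_free sigma ->
  (forall N, exists t, (N <= t)%N /\ (#|traj P I sigma t| <= B)%N) ->
  is_s P I j -> (j <= B)%N.
Proof.
move=> sf io [_ H].
have [m hm] := @liminf_exists (fun t => #|traj P I sigma t|) n (traj_card_le sigma).
have := H sigma m sf hm => jm.
case: hm => [[N0 HN0] _].
have [t [tN tB]] := io N0.
by apply: leq_trans jm (leq_trans (HN0 t tN) tB).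
Qed.

Lemma is_s_exact K : (exists sigma : nat -> 'I_n, starvation_free sigma) ->
  (forall sigma, starvation_free sigma -> exists N, forall t, (N <= t)%N -> #|traj P I sigma t| = K) ->
  is_s P I K.
Proof.
move=> [s0 sf0] H; split.
  exists s0; split => //.
  have [N HN] := H s0 sf0; split.
    by exists N => t Nt; rewrite HN.
  by move=> M; exists (maxn M N); rewrite leq_maxl HN // leq_maxr.
move=> sigma k' sf [_ H2].
have [N HN] := H sigma sf.
have [t [Nt tk]] := H2 N.
by rewrite -(HN t Nt).
Qed.

Lemma conv (B T : {set 'I_n}) sigma :
  starvation_free sigma ->
  B \subset traj P I sigma 0 -> traj P I sigma 0 \subset T ->
  (forall (W : {set 'I_n}) k, B \subset W -> W \subset T ->
     step P I W k = if k \in T then k |: W else W) ->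
  exists N, forall t, (N <= t)%N -> traj P I sigma t = T.
Proof.
move=> sf hB hT hstep.
have inv : forall t, B \subset traj P I sigma t /\ traj P I sigma t \subset T.
  elim=> [|t [IH1 IH2]] //=.
  rewrite hstep //; case: ifP => kT //.
  by rewrite subsetU ?IH1 ?orbT // subUset sub1set kT IH2.
have grow : forall t t', (t <= t')%N -> traj P I sigma t \subset traj P I sigma t'.
  move=> t t' /subnKC <-; elim: (t' - t)%N => [|d IH]; first by rewrite addn0.
  rewrite addnS /=; case: (inv (t + d)%N) => h1 h2.
  rewrite hstep //; case: ifP => // _.
  by apply: subset_trans IH (subsetUr _ _).
have ex : forall i : 'I_n, exists t, (i \in T) ==> (i \in traj P I sigma t).
  move=> i; have [t [t0 st]] := sf i 0%N.
  exists t; apply/implyP => iT.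
  case: t t0 st => // t _ st /=.
  case: (inv t) => h1 h2; rewrite hstep // st iT.
  by rewrite in_setU1 eqxx.
have [f hf] := fin_all_exists ex.
exists (\max_i f i) => t Nt.
apply/eqP; rewrite eqEsubset; case: (inv t) => _ -> /=.
apply/subsetP => i iT.
have := hf i; rewrite iT /= => hi.
apply: (subsetP (grow (f i) t _)) => //.
apply: leq_trans Nt; exact: leq_bigmax.
Qed.

End Gen.

Lemma utilityE (R : realType) n (P : population R n) k (W : {set 'I_n}) :
  utility P k W =
  (#|[set j in W | (j != k) && in_cl (pp P j) (pl P k) (pr P k)]|)%:R -
  plam P k * pb P k * (#|[set j in W | (j != k) && ~~ in_cl (pp P j) (pl P k) (pr P k)]|)%:R.
Proof.
rewrite /utility (bigID (fun j => in_cl (pp P j) (pl P k) (pr P k))) /=.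
rewrite (eq_bigr (fun _ => 1)); last by move=> j /andP[_ ->].
rewrite [X in _ + X](eq_bigr (fun _ => - (plam P k * pb P k))); last first.
  by move=> j /andP[_ /negbTE ->].
rewrite !sumr_const mulNrn -[X in - X]mulr_natr.
have e1 : forall (Q1 Q2 : pred 'I_n), Q1 =1 Q2 -> #|Q1| = #|Q2| by move=> Q1 Q2 h; apply: eq_card.
rewrite (e1 _ (mem [set j in W | (j != k) && in_cl (pp P j) (pl P k) (pr P k)])); last by move=> j; rewrite !inE andbA.
congr (_ - _ * _%:R); apply: eq_card => j; by rewrite !inE andbA.
Qed.



Section Spec.
Variables (R : realType) (S : nat).
Local Notation a := (S * S)%N.
Local Notation N := (a + a.+1)%N.
Local Notation n := N.+1.

Definition pt (i : 'I_n) : R := if (i <= a)%N then 0 else 1.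
Definition rt (i : 'I_n) : R := if (val i == 0)%N then 1 else pt i.
Definition S0s : {set 'I_n} := [set i : 'I_n | (a.+1 <= i)%N && (i < a.+1 + S)%N].
Definition mkP (lam bb : R) := Population pt rt pt (fun _ => bb) (fun _ => lam) S0s.

Lemma likesE (j k : 'I_n) : in_cl (pt j) (pt k) (rt k) = (val k == 0)%N || ((j <= a)%N == (k <= a)%N).
Proof.
rewrite /in_cl /rt /pt.
case: (eqVneq (val k) 0%N) => [k0|k0] /=.
  rewrite k0 /=; case: ifP => _; by rewrite ?lexx ?ler01.
case: ifP => ka; case: ifP => ja /=; by rewrite ?lexx ?ler01 ?ltr10 ?eqxx // ?(leNgt 1) ?(leNgt 0) ?ltr01 ?andbF.
Qed.

Lemma utilP lam bb k (W : {set 'I_n}) :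
  utility (mkP lam bb) k W =
  (#|[set j in W | (j != k) && ((val k == 0)%N || ((j <= a)%N == (k <= a)%N))]|)%:R -
  lam * bb * (#|[set j in W | (j != k) && ~~ ((val k == 0)%N || ((j <= a)%N == (k <= a)%N))]|)%:R.
Proof.
rewrite utilityE /=.
by congr (_%:R - _ * _%:R); apply: eq_card => j; rewrite !inE likesE.
Qed.


Definition Lo : {set 'I_n} := [set i : 'I_n | (0 <= i)%N && (i < a.+1)%N].
Definition Hi : {set 'I_n} := [set i : 'I_n | (a.+1 <= i)%N && (i < n)%N].
Definition Zs : {set 'I_n} := [set i : 'I_n | (0 <= i)%N && (i < 1)%N].
Definition TP : {set 'I_n} := Zs :|: Hi.

Lemma card_Lo : #|Lo| = a.+1.
Proof. rewrite /Lo card_range; lia. Qed.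
Lemma card_Hi : #|Hi| = a.+1.
Proof. rewrite /Hi card_range; lia. Qed.
Lemma card_Zs : #|Zs| = 1%N.
Proof. rewrite /Zs card_range; lia. Qed.
Lemma card_S0s : #|S0s| = S.
Proof. rewrite /S0s card_range; nia. Qed.
Lemma card_TP : #|TP| = a.+2.
Proof.
have := cardsU Zs Hi.
have -> : Zs :&: Hi = set0.
  apply/setP => j; rewrite !inE; apply/negbTE; rewrite negb_and; lia.
rewrite cards0 card_Zs card_Hi /TP => ->; lia.
Qed.

Lemma sub_card (A B : {set 'I_n}) : (forall j, j \in A -> j \in B) -> (#|A| <= #|B|)%N.
Proof. by move=> h; apply: subset_leq_card; apply/subsetP. Qed.

Definition Iall : window R := (0, 1).
Definition I1 : window R := (1, 1).

Lemma banned_all lam bb i : banned (mkP lam bb) Iall i = false.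
Proof. by rewrite /banned /= /in_cl /pt; case: ifP => _; rewrite ?lexx ?ler01. Qed.

Lemma banned_I1 lam bb i : banned (mkP lam bb) I1 i = (i <= a)%N.
Proof.
by rewrite /banned /= /in_cl /pt; case: ifP => _; rewrite ?lexx ?ler10.
Qed.

Lemma stepA lam bb (W : {set 'I_n}) k :
  0 <= lam * bb -> 1 < lam * bb * S%:R -> lam * bb <= S%:R - 1 ->
  S0s \subset W -> W \subset TP ->
  step (mkP lam bb) Iall W k = if k \in TP then k |: W else W.
Proof.
move=> c0 c1 c2 /subsetP SW /subsetP WT.
rewrite /step banned_all utilP.
have kn := ltn_ord k.
case: (boolP (k \in TP)) => kT.
  rewrite ifT //.
  move: kT; rewrite !inE => kT.
  case: (eqVneq (val k) 0%N) => k0 /=.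
    have -> : #|[set j in W | (j != k) && false]| = 0%N.
      by apply/eqP; rewrite cards_eq0; apply/eqP/setP => j; rewrite !inE !andbF.
    by rewrite mulr0 subr0 ler0n.
  have k0' : (0 < nat_of_ord k)%N by rewrite lt0n.
  set F := [set j in W | _]; set E := [set j in W | _].
  have hE : (#|E| <= 1)%N.
    rewrite -card_Zs; apply: sub_card => j; rewrite !inE => /andP [jW /andP [_ hj]].
    have := WT j jW; rewrite !inE; move: hj; case: (leqP j a) => hj1; case: (leqP k a) => hk1 //=; lia.
  have hF : ((S - 1)%N <= #|F|)%N.
    have := cardsD1 k S0s; rewrite card_S0s => hS.
    apply: (@leq_trans #|S0s :\ k|); first by move: hS; move: #|S0s :\ k| => x; case: (k \in S0s) => /= hS; lia.
    apply: sub_card => j; rewrite !inE => /andP [jk jS]; rewrite jk SW ?inE ?jS //=.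
    lia.
  have hE' : (#|E|%:R : R) <= 1 by rewrite (ler_nat R #|E| 1).
  have hF' : ((S - 1)%N%:R : R) <= #|F|%:R by rewrite ler_nat.
  have hS : ((S - 1)%N%:R : R) = S%:R - 1.
    have S0 : (0 < S)%N.
      case: S c1 => //; rewrite mulr0; lra.
    by rewrite natrB.
  have : lam * bb * #|E|%:R <= lam * bb by rewrite -[X in _ <= X]mulr1; apply: ler_wpM2l.
  rewrite subr_ge0; lra.
have kW : k \notin W by apply/negP => /WT; rewrite (negPf kT).
rewrite ifF; first by apply/setP => j; rewrite !inE; case: eqVneq => // ->; rewrite (negPf kW).
apply/negbTE; rewrite -ltNge.
move: kT; rewrite !inE => kT.
have k0' : (0 < nat_of_ord k)%N by lia.
have k0 : (val k == 0%N) = false by change ((nat_of_ord k == 0%N) = false); apply/negbTE; rewrite -lt0n.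
rewrite k0 /=.
set F := [set j in W | _]; set E := [set j in W | _].
have hF : (#|F| <= 1)%N.
  rewrite -card_Zs; apply: sub_card => j; rewrite !inE => /andP [jW /andP [_ hj]].
  have := WT j jW; rewrite !inE; move: hj; case: (leqP j a) => hj1; case: (leqP k a) => hk1 //=; lia.
have hE : (S <= #|E|)%N.
  apply: (@leq_trans #|S0s|); first by rewrite card_S0s.
  apply: sub_card => j jS; rewrite !inE SW //=.
  move: jS; rewrite !inE => jS.
  have jk : (j != k).
    rewrite -val_eqE; apply/eqP => e; have e' : nat_of_ord j = nat_of_ord k := e.
    move: jS kT; rewrite e'; nia.
  rewrite jk.
  case: (leqP j a) => hj1; case: (leqP k a) => hk1 //=; lia.
have hE' : (S%:R : R) <= #|E|%:R by rewrite ler_nat.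
have hF' : (#|F|%:R : R) <= 1 by rewrite (ler_nat R #|F| 1).
have : lam * bb * S%:R <= lam * bb * #|E|%:R by apply: ler_wpM2l.
rewrite subr_lt0; lra.
Qed.

Lemma ordE (i k : 'I_n) : (i == k) = (nat_of_ord i == nat_of_ord k).
Proof. exact: esym (val_eqE i k). Qed.

Lemma utilP' lam bb k (W : {set 'I_n}) :
  utility (mkP lam bb) k W =
  (#|[set j in W | (j != k) && ((nat_of_ord k == 0)%N || ((j <= a)%N == (k <= a)%N))]|)%:R -
  lam * bb * (#|[set j in W | (j != k) && ~~ ((nat_of_ord k == 0)%N || ((j <= a)%N == (k <= a)%N))]|)%:R.
Proof. exact: utilP. Qed.

Lemma traj0A lam bb sigma : traj (mkP lam bb) Iall sigma 0 = S0s.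
Proof. by apply/setP => i; rewrite /= !inE banned_all andbT. Qed.

Lemma convA lam bb sigma :
  0 <= lam * bb -> 1 < lam * bb * S%:R -> lam * bb <= S%:R - 1 ->
  starvation_free sigma ->
  exists N0, forall t, (N0 <= t)%N -> traj (mkP lam bb) Iall sigma t = TP.
Proof.
move=> c0 c1 c2 sf.
apply: (@conv R n (mkP lam bb) Iall S0s TP sigma) => //.
- by rewrite traj0A.
- rewrite traj0A; apply/subsetP => j; rewrite !inE; nia.
- by move=> W k h1 h2; apply: stepA.
Qed.

Lemma convB lam bb sigma :
  0 <= lam * bb -> starvation_free sigma ->
  exists N0, forall t, (N0 <= t)%N -> traj (mkP lam bb) I1 sigma t = Hi.
Proof.
move=> c0 sf.
apply: (@conv R n (mkP lam bb) I1 set0 Hi sigma) => //.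
- exact: sub0set.
- apply/subsetP => j; rewrite /= !inE banned_I1 => /andP [_]; have := ltn_ord j; lia.
- move=> W k _ /subsetP WH.
  rewrite /step banned_I1 !inE.
  have kn := ltn_ord k.
  case: (leqP k a) => ka //=.
  rewrite kn ifT // utilP'.
  have -> : #|[set j in W | (j != k) && ~~ ((nat_of_ord k == 0)%N || ((j <= a)%N == (k <= a)%N))]| = 0%N.
    apply/eqP; rewrite cards_eq0; apply/eqP/setP => j; rewrite !inE.
    apply/negbTE; apply/negP => /andP [jW /andP [_ h]]; move: h.
    have := WH j jW; rewrite !inE => hj.
    case: (leqP j a) => hj1; case: (leqP k a) => hk1 //=; lia.
  by rewrite mulr0 subr0 ler0n.
Qed.

Definition rr (t : nat) : 'I_n := inord (t.-1 %% n).

Lemma rr_sf : starvation_free rr.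
Proof.
move=> i M; exists (M * n + i).+1; split; first by nia.
rewrite /rr /= modnMDl modn_small ?ltn_ord //.
by apply: val_inj; rewrite /= inordK.
Qed.

Definition G (t : nat) : {set 'I_n} :=
  [set i : 'I_n | ((i < t)%N && (i < a.+1)%N) || ((t <= i)%N && ((a.+1 <= i)%N && (i < a.+1 + S)%N))].

Lemma stepLo lam bb k : 0 < lam * bb ->
  step (mkP lam bb) Iall Lo k = Lo.
Proof.
move=> c0.
rewrite /step banned_all utilP'.
have kn := ltn_ord k.
have [ka|ka] : (k <= a)%N \/ (a < k)%N by lia.
  rewrite ifT; first by apply/setP => j; rewrite !inE ordE; case: eqVneq => // ->; lia.
  have -> : #|[set j in Lo | (j != k) && ~~ ((nat_of_ord k == 0)%N || ((j <= a)%N == (k <= a)%N))]| = 0%N.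
    apply/eqP; rewrite cards_eq0; apply/eqP/setP => j; rewrite !inE.
    apply/negbTE; apply/negP => /andP [hj /andP [_ h]]; move: h.
    case: (leqP j a) => hj1; case: (leqP k a) => hk1 //=; lia.
  by rewrite mulr0 subr0 ler0n.
rewrite ifF; first by apply/setP => j; rewrite !inE ordE; case: eqVneq => // ->; lia.
have -> : #|[set j in Lo | (j != k) && ((nat_of_ord k == 0)%N || ((j <= a)%N == (k <= a)%N))]| = 0%N.
  apply/eqP; rewrite cards_eq0; apply/eqP/setP => j; rewrite !inE.
  apply/negbTE; apply/negP => /andP [hj /andP [_ h]]; move: h.
  case: (leqP j a) => hj1; case: (leqP k a) => hk1 //=; lia.
set E := #|_|.
have hE : (1 <= E)%N.
  apply: (@leq_trans #|Zs|); first by rewrite card_Zs.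
  apply: sub_card => j; rewrite !inE ordE => hj.
  case: (leqP j a) => hj1; case: (leqP k a) => hk1 //=; lia.
apply/negbTE; rewrite -ltNge sub0r oppr_lt0.
apply: mulr_gt0 => //; rewrite ltr0n; lia.
Qed.

Lemma card0P (A : {set 'I_n}) : (forall j, j \in A -> False) -> #|A| = 0%N.
Proof. by move=> h; apply/eqP; rewrite cards_eq0; apply/eqP/setP => j; rewrite inE; apply/negP => /h. Qed.

Lemma stepG1 lam bb (k : 'I_n) : 0 < lam * bb -> lam * bb * S%:R = 1 -> (k <= a)%N ->
  step (mkP lam bb) Iall (G k) k = G k.+1.
Proof.
move=> c0 c1 ka.
rewrite /step banned_all utilP'.
have kn := ltn_ord k.
rewrite ifT; first by apply/setP => j; rewrite !inE ordE; case: eqVneq => [->|]; lia.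
have [k0|k0] : (nat_of_ord k = 0)%N \/ (0 < k)%N by lia.
  have k0' : (nat_of_ord k == 0%N) = true by apply/eqP.
  rewrite k0' /= (@card0P [set j in G k | (j != k) && false]) ?mulr0 ?subr0 ?ler0n // => j.
  by rewrite !inE !andbF.
set F := #|[set j in G k | _ & _ || _]|.
set E := #|[set j in G k | _ & ~~ _]|.
have hF : (1 <= F)%N.
  apply: (@leq_trans #|Zs|); first by rewrite card_Zs.
  apply: sub_card => j; rewrite !inE ordE => hj.
  have -> : (j <= a)%N = true by lia.
  have -> : (k <= a)%N = true by lia.
  rewrite eqxx orbT andbT; apply/andP; split; lia.
have hE : (E <= S)%N.
  apply: (@leq_trans #|S0s|); last by rewrite card_S0s.
  apply: sub_card => j; rewrite !inE ordE => /andP [hj /andP [_ h]]; move: h.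
  case: (leqP j a) => hj1; case: (leqP k a) => hk1 //=; lia.
have hF' : (1 : R) <= F%:R by rewrite (ler_nat R 1 F).
have hE' : (E%:R : R) <= S%:R by rewrite ler_nat.
have : lam * bb * E%:R <= lam * bb * S%:R by apply: ler_wpM2l => //; apply: ltW.
rewrite subr_ge0; lra.
Qed.

Lemma stepG2 lam bb (k : 'I_n) : 0 < lam * bb -> lam * bb * S%:R = 1 -> (a < k)%N -> (k < a.+1 + S)%N ->
  step (mkP lam bb) Iall (G k) k = G k.+1.
Proof.
move=> c0 c1 ka kS.
rewrite /step banned_all utilP'.
have kn := ltn_ord k.
have k0 : (nat_of_ord k == 0%N) = false by apply/negbTE; lia.
rewrite ifF; first by apply/setP => j; rewrite !inE ordE; case: eqVneq => [->|]; lia.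
rewrite k0 /=.
set F := #|[set j in G k | _ & _ == _]|.
set E := #|[set j in G k | _ & _ != _]|.
have hF : (F <= S - 1)%N.
  have := cardsD1 k S0s; rewrite card_S0s => hS.
  have kS0 : k \in S0s by rewrite inE; lia.
  rewrite kS0 in hS.
  apply: (@leq_trans #|S0s :\ k|); last by move: hS; move: #|S0s :\ k| => x /= hS; lia.
  apply: sub_card => j; rewrite !inE ordE => /andP [hj /andP [jk h]]; move: h.
  rewrite jk /=.
  case: (leqP j a) => hj1; case: (leqP k a) => hk1 //=; lia.
have hE : (a.+1 <= E)%N.
  apply: (@leq_trans #|Lo|); first by rewrite card_Lo.
  apply: sub_card => j; rewrite !inE ordE => hj.
  case: (leqP j a) => hj1; case: (leqP k a) => hk1 //=; lia.
have hF' : (F%:R : R) <= S%:R - 1.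
  have S1 : (1 <= S)%N by lia.
  by rewrite -(natrB _ S1) ler_nat.
have hE' : (a.+1%:R : R) <= E%:R by rewrite ler_nat.
have : lam * bb * a.+1%:R <= lam * bb * E%:R by apply: ler_wpM2l => //; apply: ltW.
have -> : lam * bb * a.+1%:R = S%:R + lam * bb.
  by rewrite -addn1 natrD natrM mulrDr mulr1 mulrA c1 mul1r.
move=> h; apply/negbTE; rewrite -ltNge subr_lt0; lra.
Qed.

Lemma G_Lo t : (a.+1 + S <= t)%N -> G t = Lo.
Proof. by move=> h; apply/setP => j; rewrite !inE; have := ltn_ord j; lia. Qed.

Lemma trajC lam bb : 0 < lam * bb -> lam * bb * S%:R = 1 ->
  forall t, traj (mkP lam bb) Iall rr t = G t.
Proof.
move=> c0 c1; elim=> [|t IH].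
  by rewrite traj0A; apply/setP => j; rewrite !inE; lia.
rewrite /= IH.
have [tS|tS] : (t < a.+1 + S)%N \/ (a.+1 + S <= t)%N by lia.
  have kt : nat_of_ord (rr t.+1) = t.
    rewrite /rr /= modn_small ?inordK //; nia.
  have -> : G t = G (rr t.+1) by rewrite kt.
  have -> : G t.+1 = G (rr t.+1).+1 by rewrite kt.
  have [ta|ta] : (t <= a)%N \/ (a < t)%N by lia.
    by apply: stepG1 => //; rewrite kt.
  by apply: stepG2 => //; rewrite kt.
by rewrite !G_Lo ?stepLo //; lia.
Qed.

Lemma traj_ext (P0 : population R n) (I J : window R) sigma :
  (forall i, banned P0 I i = banned P0 J i) -> forall t, traj P0 I sigma t = traj P0 J sigma t.
Proof.
move=> h; elim=> [|t IH] /=.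
  by apply/setP => i; rewrite !inE h.
by rewrite IH /step h.
Qed.

Lemma window_cases lam bb (J : window R) :
  (forall i, banned (mkP lam bb) J i = banned (mkP lam bb) Iall i) \/
  (#|[set i | ~~ banned (mkP lam bb) J i]| <= a.+1)%N.
Proof.
have bE : forall i, banned (mkP lam bb) J i =
   if (i <= a)%N then ~~ in_cl 0 J.1 J.2 else ~~ in_cl 1 J.1 J.2.
  by move=> i; rewrite /banned /= /pt; case: ifP.
case z0 : (in_cl 0 J.1 J.2); case z1 : (in_cl 1 J.1 J.2).
- by left => i; rewrite banned_all bE z0 z1; case: ifP.
- right; apply: (@leq_trans #|Lo|); last (by rewrite card_Lo); apply: sub_card => j; rewrite !inE bE z1 /=; case: ifP => //; lia.
- right; apply: (@leq_trans #|Hi|); last (by rewrite card_Hi); apply: sub_card => j; rewrite !inE bE z0 /=; have := ltn_ord j; case: ifP => //; lia.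
- by right; apply: (@leq_trans #|Lo|); last (by rewrite card_Lo); apply: sub_card => j; rewrite !inE bE z0 z1 /=; case: ifP.
Qed.

Lemma upper_gen lam bb (J : window R) j B :
  (a.+1 <= B)%N ->
  (forall N0, exists t, (N0 <= t)%N /\ (#|traj (mkP lam bb) Iall rr t| <= B)%N) ->
  is_s (mkP lam bb) J j -> (j <= B)%N.
Proof.
move=> aB hio hs.
case: (window_cases lam bb J) => [hb|hc].
  apply: (@is_s_upper R n (mkP lam bb) J rr) hs => //; first exact: rr_sf.
  by move=> N0; have [t [h1 h2]] := hio N0; exists t; rewrite (@traj_ext (mkP lam bb) J Iall rr hb); split.
apply: (@is_s_upper R n (mkP lam bb) J rr) hs => //; first exact: rr_sf.
move=> N0; exists N0; split => //.
apply: leq_trans aB; apply: leq_trans hc.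
exact/subset_leq_card/traj_sub.
Qed.

Lemma optP lam bb : 0 <= lam * bb -> 1 < lam * bb * S%:R -> lam * bb <= S%:R - 1 ->
  is_opt_s (mkP lam bb) a.+2.
Proof.
move=> c0 c1 c2.
have [N0 HN] := @convA lam bb rr c0 c1 c2 rr_sf.
exists Iall; split.
  apply: is_s_exact; first by exists rr; exact: rr_sf.
  move=> sigma sf; have [N1 HN1] := @convA lam bb sigma c0 c1 c2 sf.
  by exists N1 => t tN; rewrite HN1 // card_TP.
move=> J j; apply: upper_gen => // N1.
by exists (maxn N0 N1); rewrite leq_maxr HN ?leq_maxl // card_TP.
Qed.

Lemma optP' lam bb : 0 < lam * bb -> lam * bb * S%:R = 1 ->
  is_opt_s (mkP lam bb) a.+1.
Proof.
move=> c0 c1.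
exists I1; split.
  apply: is_s_exact; first by exists rr; exact: rr_sf.
  move=> sigma sf; have [N1 HN1] := @convB lam bb sigma (ltW c0) sf.
  by exists N1 => t tN; rewrite HN1 // card_Hi.
move=> J j; apply: upper_gen => // N1.
exists (maxn N1 (a.+1 + S)); rewrite leq_maxl (@trajC lam bb c0 c1) G_Lo ?card_Lo ?leq_maxr //.
Qed.
End Spec.



Lemma part2 (R : realType) (bb la : R) : 0 < bb -> 0 < la <= 1 ->
   exists (n : nat) (l r p : 'I_n -> R) (S0 : {set 'I_n}) (la' : R),
     let P := Population l r p (fun _ => bb) (fun _ => la) S0 in
     let P' := Population l r p (fun _ => bb) (fun _ => la') S0 in
     [/\ valid_pop P, valid_pop P', la' < la &
      exists k k' : nat, [/\ is_opt_s P k, is_opt_s P' k' & (k' < k)%N]].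
Proof.
move=> bb0 /andP [la0 la1].
set c := la * bb.
have c0 : 0 < c by apply: mulr_gt0.
have x0 : 0 <= c + c^-1 + 1 by have := invr_gt0 c; rewrite c0 => /= h; lra.
have hS := archi_boundP x0.
set S := Num.Def.archi_bound (c + c^-1 + 1) in hS.
have S0 : 0 < S%:R :> R by have := invr_gt0 c; rewrite c0 => /= h; lra.
have c1 : 1 < c * S%:R.
  have : c * c^-1 < c * S%:R by rewrite ltr_pM2l //; have := invr_gt0 c; lra.
  by rewrite mulfV //; exact: lt0r_neq0.
have c2 : c <= S%:R - 1 by have := invr_gt0 c; rewrite c0 => /= h; lra.
set la' := (S%:R * bb)^-1.
have c'E : la' * bb = S%:R^-1.
  rewrite /la' invfM -mulrA mulVf ?mulr1 //; exact: lt0r_neq0.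
have c'0 : 0 < la' * bb by rewrite c'E invr_gt0.
have c'1 : la' * bb * S%:R = 1 by rewrite c'E mulVf //; exact: lt0r_neq0.
have lt' : la' < la.
  rewrite -(ltr_pM2r bb0) -/c c'E.
  have : S%:R^-1 * 1 < S%:R^-1 * (c * S%:R) by rewrite ltr_pM2l ?invr_gt0.
  by rewrite mulr1 mulrC -mulrA mulfV ?mulr1 //; exact: lt0r_neq0.
have la'0 : 0 < la' by rewrite /la' invr_gt0 mulr_gt0.
exists (S * S + (S * S).+1).+1, (pt R S), (rt R S), (pt R S), (S0s S), la'.
split.
- move=> i; split => //=; first by rewrite /in_cl lexx /rt; case: ifP => // _; rewrite /pt; case: ifP => _; rewrite ?ler01 ?lexx.
  + exact: ltW.
  + by rewrite /in_cl (ltW la0) la1.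
- move=> i; split => //=; first by rewrite /in_cl lexx /rt; case: ifP => // _; rewrite /pt; case: ifP => _; rewrite ?ler01 ?lexx.
  + exact: ltW.
  + by rewrite /in_cl (ltW la'0) /=; apply: ltW; apply: lt_le_trans lt' la1.
- exact: lt'.
- exists (S * S).+2, (S * S).+1; split => //.
  + exact: (@optP R S la bb (ltW c0) c1 c2).
  + exact: (@optP' R S la' bb c'0 c'1).
Qed.

Theorem proposition6 (R : realType) :
  (exists (n : nat) (l r p b lam lam' : 'I_n -> R) (S0 : {set 'I_n}),
     let P := Population l r p b lam S0 in
     let P' := Population l r p b lam' S0 in
     [/\ valid_pop P, valid_pop P', (forall i, lam' i < lam i) &
      exists k k' : nat, [/\ is_opt_s P k, is_opt_s P' k' & (k' < k)%N]])
  /\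
  (forall (bb la : R), 0 < bb -> 0 < la <= 1 ->
   exists (n : nat) (l r p : 'I_n -> R) (S0 : {set 'I_n}) (la' : R),
     let P := Population l r p (fun _ => bb) (fun _ => la) S0 in
     let P' := Population l r p (fun _ => bb) (fun _ => la') S0 in
     [/\ valid_pop P, valid_pop P', la' < la &
      exists k k' : nat, [/\ is_opt_s P k, is_opt_s P' k' & (k' < k)%N]]).
Proof.
split; last exact: part2.
have h01 : ((0 : R) < 1) && ((1 : R) <= 1) by rewrite ltr01 lexx.
have [n [l [r [p [S0 [la' H]]]]]] := @part2 R 1 1 ltr01 h01.
exists n, l, r, p, (fun _ => 1), (fun _ => 1), (fun _ => la'), S0.
case: H => v1 v2 lt hk; split => //.
Qed.
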